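(* Let $(G,\mathcal F_\bullet G,\mathfrak R)$ be a filtered Rota–Baxter group such that $\mathsf{gr}\,G$ has a structure of a $\mathbb Q$-Lie algebra (i.e. each $\mathsf{gr}_nG$ is a uniquely divisible abelian group, with $\mathbb Q$-action determined by $m\cdot\bar x=\overline{x^m}$). Then the map $\mathsf{gr}\,\mathfrak R:\mathsf{gr}\,G\to\mathsf{gr}\,G$ is $\mathbb Q$-linear and $(\mathsf{gr}\,G,\mathsf{gr}\,\mathfrak R)$ is a graded Rota–Baxter $\mathbb Q$-Lie algebra.
   Context: For a group $G$ write $(x,y)=xyx^{-1}y^{-1}$. A filtered group is a group with subgroups $G=\mathcal F_1G\supset\mathcal F_2G\supset\cdots$ such that the subgroup generated by commutators $(x,y)$, $x\in\mathcal F_nG$, $y\in\mathcal F_mG$, lies in $\mathcal F_{n+m}G$. Then $\mathsf{gr}_nG=\mathcal F_nG/\mathcal F_{n+1}G$ is abelian, written additively ($\bar x+\bar y=\overline{xy}$), and $\mathsf{gr}\,G=\bigoplus_{n\ge1}\mathsf{gr}_nG$ is a graded Lie ring with bracket determined by $[\bar x,\bar y]=\overline{(x,y)}\in\mathsf{gr}_{n+m}G$ for $x\in\mathcal F_nG,y\in\mathcal F_mG$. A filtered Rota–Baxter group is a filtered group with a map $\mathfrak R$ satisfying $\mathfrak R(g)\mathfrak R(h)=\mathfrak R(g\mathfrak R(g)h\mathfrak R(g)^{-1})$ and $\mathfrak R(\mathcal F_nG)\subset\mathcal F_nG$. $\mathsf{gr}\,\mathfrak R$ is the additive map acting on $\mathsf{gr}_nG$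 by $\bar x\mapsto\overline{\mathfrak R(x)}$ (well defined). A graded Rota–Baxter ($\mathbb Q$-)Lie algebra is a graded Lie algebra with a linear map $P$ preserving each graded component and satisfying $[P(a),P(b)]=P([P(a),b]+[a,P(b)]+[a,b])$. *)

(* Defs.v *)
From Stdlib Require Import Arith ZArith.

Section GroupDefs.
Context {G : Type} (mul : G -> G -> G) (inv : G -> G) (e : G).

Record is_group : Prop := {
  grp_assoc : forall x y z, mul x (mul y z) = mul (mul x y) z;
  grp_left_id : forall x, mul e x = x;
  grp_left_inv : forall x, mul (inv x) x = e
}.

Definition comm (x y : G) : G := mul (mul (mul x y) (inv x)) (inv y).

Fixpoint gpow (x : G) (n : nat) : G :=
  match n with O => e | S k => mul x (gpow x k) end.

Definition zpow (x : G) (z : Z) : G :=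
  match z with
  | Z0 => e
  | Zpos p => gpow x (Pos.to_nat p)
  | Zneg p => inv (gpow x (Pos.to_nat p))
  end.

Definition is_subgroup (H : G -> Prop) : Prop :=
  H e /\ (forall x y, H x -> H y -> H (mul x y)) /\ (forall x, H x -> H (inv x)).

(* A filtration G = F_1 ⊇ F_2 ⊇ ... by subgroups with (F_n, F_m) ⊆ F_(n+m).
   Only the indices n >= 1 are meaningful; F 0 is ignored. *)
Record is_filtration (F : nat -> G -> Prop) : Prop := {
  filt_one : forall x, F 1 x;
  filt_subgroup : forall n, 1 <= n -> is_subgroup (F n);
  filt_decr : forall n x, 1 <= n -> F (S n) x -> F n x;
  filt_comm : forall n m x y, 1 <= n -> 1 <= m -> F n x -> F m y ->
                F (n + m) (comm x y)
}.

Record is_filtered_RB (F : nat -> G -> Prop) (R : G -> G) : Prop := {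
  rb_identity : forall g h,
    mul (R g) (R h) = R (mul (mul (mul g (R g)) h) (inv (R g)));
  rb_filt : forall n x, 1 <= n -> F n x -> F n (R x)
}.

(* Equality in gr_n G = F_n / F_(n+1) of the classes of x, y ∈ F_n. *)
Definition gr_eq (F : nat -> G -> Prop) (n : nat) (x y : G) : Prop :=
  F (S n) (mul (inv y) x).

(* Each gr_n G (n >= 1) is uniquely divisible: multiplication by every
   m >= 1, x̄ ↦ m·x̄ = overline{x^m}, is a bijection of gr_n G. *)
Definition gr_uniquely_divisible (F : nat -> G -> Prop) : Prop :=
  forall n m, 1 <= n -> 1 <= m ->
    (forall x, F n x -> exists y, F n y /\ gr_eq F n (gpow y m) x) /\
    (forall y1 y2, F n y1 -> F n y2 ->
       gr_eq F n (gpow y1 m) (gpow y2 m) -> gr_eq F n y1 y2).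

Definition grR_well_defined (F : nat -> G -> Prop) (R : G -> G) : Prop :=
  forall n x y, 1 <= n -> F n x -> F n y -> gr_eq F n x y -> gr_eq F n (R x) (R y).

Definition grR_additive (F : nat -> G -> Prop) (R : G -> G) : Prop :=
  forall n x y, 1 <= n -> F n x -> F n y ->
    gr_eq F n (R (mul x y)) (mul (R x) (R y)).

(* gr R commutes with the Q-action: for q = a/b (b >= 1), q·x̄ is the unique
   ȳ with b·ȳ = a·x̄ (where k·x̄ = overline{x^k}, k ∈ Z); so Q-homogeneity
   reads: b·ȳ = a·x̄  ⇒  b·(gr R)ȳ = a·(gr R)x̄. *)
Definition grR_Q_homogeneous (F : nat -> G -> Prop) (R : G -> G) : Prop :=
  forall n (a : Z) (b : positive) x y, 1 <= n -> F n x -> F n y ->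
    gr_eq F n (zpow y (Zpos b)) (zpow x a) ->
    gr_eq F n (zpow (R y) (Zpos b)) (zpow (R x) a).

(* Rota–Baxter identity in gr G for homogeneous x̄ ∈ gr_n, ȳ ∈ gr_m:
   [P x̄, P ȳ] = P([P x̄, ȳ] + [x̄, P ȳ] + [x̄, ȳ]) in gr_(n+m). *)
Definition grR_RB_identity (F : nat -> G -> Prop) (R : G -> G) : Prop :=
  forall n m x y, 1 <= n -> 1 <= m -> F n x -> F m y ->
    gr_eq F (n + m) (comm (R x) (R y))
      (R (mul (mul (comm (R x) y) (comm x (R y))) (comm x y))).

End GroupDefs.

(* Main.v *)
Require Import Defs.
From Stdlib Require Import Arith ZArith Lia.

Lemma g_mulVr {G} {mul : G -> G -> G} {inv e} (HG : is_group mul inv e) x :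
  mul x (inv x) = e.
Proof.
  destruct HG as [A L I].
  rewrite <- (L (mul x (inv x))).
  rewrite <- (I (inv x)) at 1.
  rewrite <- A. rewrite (A (inv x) x (inv x)). rewrite I, L. apply I.
Qed.

Lemma g_mul1r {G} {mul : G -> G -> G} {inv e} (HG : is_group mul inv e) x :
  mul x e = x.
Proof.
  rewrite <- (grp_left_inv _ _ _ HG x), (grp_assoc _ _ _ HG), (g_mulVr HG).
  apply (grp_left_id _ _ _ HG).
Qed.

Lemma g_KV {G} {mul : G -> G -> G} {inv e} (HG : is_group mul inv e) x y :
  mul (inv x) (mul x y) = y.
Proof. rewrite (grp_assoc _ _ _ HG), (grp_left_inv _ _ _ HG). apply (grp_left_id _ _ _ HG). Qed.

Lemma g_VK {G} {mul : G -> G -> G} {inv e} (HG : is_group mul inv e) x y :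
  mul x (mul (inv x) y) = y.
Proof. rewrite (grp_assoc _ _ _ HG), (g_mulVr HG). apply (grp_left_id _ _ _ HG). Qed.

Lemma g_inv_uniq {G} {mul : G -> G -> G} {inv e} (HG : is_group mul inv e) a b :
  mul a b = e -> b = inv a.
Proof.
  intro H. rewrite <- (g_KV HG a b), H. apply (g_mul1r HG).
Qed.

Lemma g_invM {G} {mul : G -> G -> G} {inv e} (HG : is_group mul inv e) x y :
  inv (mul x y) = mul (inv y) (inv x).
Proof.
  symmetry. apply (g_inv_uniq HG).
  rewrite <- (grp_assoc _ _ _ HG), (g_VK HG). apply (g_mulVr HG).
Qed.

Lemma g_invK {G} {mul : G -> G -> G} {inv e} (HG : is_group mul inv e) x :
  inv (inv x) = x.
Proof. symmetry. apply (g_inv_uniq HG). apply (grp_left_inv _ _ _ HG). Qed.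

Lemma g_inv1 {G} {mul : G -> G -> G} {inv e} (HG : is_group mul inv e) :
  inv e = e.
Proof. symmetry. apply (g_inv_uniq HG). apply (grp_left_id _ _ _ HG). Qed.

Ltac gsimp HG :=
  unfold comm in *;
  repeat first
    [ rewrite <- (grp_assoc _ _ _ HG)
    | rewrite (g_invM HG)
    | rewrite (g_invK HG)
    | rewrite (g_inv1 HG)
    | rewrite (grp_left_id _ _ _ HG)
    | rewrite (g_mul1r HG)
    | rewrite (g_KV HG)
    | rewrite (g_VK HG)
    | rewrite (grp_left_inv _ _ _ HG)
    | rewrite (g_mulVr HG) ].


Lemma F_e {G} {mul : G -> G -> G} {inv e F} (HF : is_filtration mul inv e F) k :
  1 <= k -> F k e.
Proof. intro. apply (filt_subgroup _ _ _ _ HF k H). Qed.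
Lemma F_mul {G} {mul : G -> G -> G} {inv e F} (HF : is_filtration mul inv e F) k x y :
  1 <= k -> F k x -> F k y -> F k (mul x y).
Proof. intro. apply (filt_subgroup _ _ _ _ HF k H). Qed.
Lemma F_inv {G} {mul : G -> G -> G} {inv e F} (HF : is_filtration mul inv e F) k x :
  1 <= k -> F k x -> F k (inv x).
Proof. intro. apply (filt_subgroup _ _ _ _ HF k H). Qed.

Lemma F_mono {G} {mul : G -> G -> G} {inv e F} (HF : is_filtration mul inv e F) j k x :
  1 <= j -> j <= k -> F k x -> F j x.
Proof.
  intros Hj Hjk. induction Hjk; auto.
  intro H. apply IHHjk. apply (filt_decr _ _ _ _ HF); [lia|assumption].
Qed.

Lemma F_conj {G} {mul : G -> G -> G} {inv e F} (HG : is_group mul inv e)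
  (HF : is_filtration mul inv e F) k g f :
  1 <= k -> F k f -> F k (mul (mul g f) (inv g)).
Proof.
  intros Hk Hf.
  replace (mul (mul g f) (inv g)) with (mul (comm mul inv g f) f).
  - apply (F_mul HF); auto.
    apply (F_mono HF k (1 + k)); try lia.
    apply (filt_comm _ _ _ _ HF); auto; try lia. apply (filt_one _ _ _ _ HF).
  - gsimp HG. reflexivity.
Qed.

Lemma ge_refl {G} {mul : G -> G -> G} {inv e F} (HG : is_group mul inv e)
  (HF : is_filtration mul inv e F) N a : gr_eq mul inv F N a a.
Proof. unfold gr_eq. rewrite (grp_left_inv _ _ _ HG). apply (F_e HF). lia. Qed.

Lemma ge_sym {G} {mul : G -> G -> G} {inv e F} (HG : is_group mul inv e)
  (HF : is_filtration mul inv e F) N a b :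
  gr_eq mul inv F N a b -> gr_eq mul inv F N b a.
Proof.
  unfold gr_eq. intro H. apply (F_inv HF) in H; [|lia]. rewrite (g_invM HG), (g_invK HG) in H. exact H.
Qed.

Lemma ge_trans {G} {mul : G -> G -> G} {inv e F} (HG : is_group mul inv e)
  (HF : is_filtration mul inv e F) N a b c :
  gr_eq mul inv F N a b -> gr_eq mul inv F N b c -> gr_eq mul inv F N a c.
Proof.
  unfold gr_eq. intros H1 H2.
  replace (mul (inv c) a) with (mul (mul (inv c) b) (mul (inv b) a)).
  - apply (F_mul HF); auto; lia.
  - gsimp HG. reflexivity.
Qed.

Lemma ge_mulr {G} {mul : G -> G -> G} {inv e F} (HG : is_group mul inv e)
  (HF : is_filtration mul inv e F) N a b c :
  gr_eq mul inv F N a b -> gr_eq mul inv F N (mul a c) (mul b c).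
Proof.
  unfold gr_eq. intros H.
  replace (mul (inv (mul b c)) (mul a c)) with
      (mul (mul (inv c) (mul (inv b) a)) (inv (inv c))).
  - apply (F_conj HG HF); auto; lia.
  - gsimp HG. reflexivity.
Qed.

Lemma ge_mull {G} {mul : G -> G -> G} {inv e F} (HG : is_group mul inv e)
  (HF : is_filtration mul inv e F) N a b c :
  gr_eq mul inv F N a b -> gr_eq mul inv F N (mul c a) (mul c b).
Proof.
  unfold gr_eq. intros H.
  replace (mul (inv (mul c b)) (mul c a)) with (mul (inv b) a); auto.
  gsimp HG. reflexivity.
Qed.

Lemma ge_mul {G} {mul : G -> G -> G} {inv e F} (HG : is_group mul inv e)
  (HF : is_filtration mul inv e F) N a b c d :
  gr_eq mul inv F N a b -> gr_eq mul inv F N c d ->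
  gr_eq mul inv F N (mul a c) (mul b d).
Proof.
  intros. apply (ge_trans HG HF N _ (mul b c)).
  - apply (ge_mulr HG HF); auto.
  - apply (ge_mull HG HF); auto.
Qed.

Lemma ge_inv {G} {mul : G -> G -> G} {inv e F} (HG : is_group mul inv e)
  (HF : is_filtration mul inv e F) N a b :
  gr_eq mul inv F N a b -> gr_eq mul inv F N (inv a) (inv b).
Proof.
  unfold gr_eq. intros H.
  replace (mul (inv (inv b)) (inv a)) with
      (mul (mul b (inv (mul (inv b) a))) (inv b)).
  - apply (F_conj HG HF); [lia|]. apply (F_inv HF); auto; lia.
  - gsimp HG. reflexivity.
Qed.

Lemma ge_eq {G} {mul : G -> G -> G} {inv e F} (HG : is_group mul inv e)
  (HF : is_filtration mul inv e F) N a b :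
  a = b -> gr_eq mul inv F N a b.
Proof. intros ->. apply (ge_refl HG HF). Qed.

Lemma ge_central {G} {mul : G -> G -> G} {inv e F} (HG : is_group mul inv e)
  (HF : is_filtration mul inv e F) N z g :
  1 <= N -> F N z -> gr_eq mul inv F N (mul z g) (mul g z).
Proof.
  unfold gr_eq. intros HN Hz.
  replace (mul (inv (mul g z)) (mul z g)) with (comm mul inv (inv z) (inv g)).
  - rewrite <- Nat.add_1_r. apply (filt_comm _ _ _ _ HF); auto.
    apply (F_inv HF); auto. apply (filt_one _ _ _ _ HF).
  - gsimp HG. reflexivity.
Qed.

Lemma comm_F {G} {mul : G -> G -> G} {inv e F} (HF : is_filtration mul inv e F) n m x y :
  1 <= n -> 1 <= m -> F n x -> F m y -> F (n + m) (comm mul inv x y).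
Proof. apply (filt_comm _ _ _ _ HF). Qed.

Lemma bilin_l {G} {mul : G -> G -> G} {inv e F} (HG : is_group mul inv e)
  (HF : is_filtration mul inv e F) n m a b v :
  1 <= n -> 1 <= m -> F n a -> F n b -> F m v ->
  gr_eq mul inv F (n + m) (comm mul inv (mul a b) v)
        (mul (comm mul inv a v) (comm mul inv b v)).
Proof.
  intros Hn Hm Ha Hb Hv.
  pose proof (comm_F HF n m a v Hn Hm Ha Hv) as Hav.
  pose proof (comm_F HF n m b v Hn Hm Hb Hv) as Hbv.
  set (z := comm mul inv b v) in *. set (w := comm mul inv a v) in *.
  replace (comm mul inv (mul a b) v) with (mul (mul a (mul z (inv a))) w).
  2:{ unfold z, w. gsimp HG. reflexivity. }
  apply (ge_trans HG HF _ _ (mul z w)).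
  - apply (ge_mulr HG HF).
    apply (ge_trans HG HF _ _ (mul a (mul (inv a) z))).
    + apply (ge_mull HG HF). apply (ge_central HG HF); auto; lia.
    + apply (ge_eq HG HF). apply (g_VK HG).
  - apply (ge_central HG HF); auto; lia.
Qed.

Lemma bilin_r {G} {mul : G -> G -> G} {inv e F} (HG : is_group mul inv e)
  (HF : is_filtration mul inv e F) n m u a b :
  1 <= n -> 1 <= m -> F n u -> F m a -> F m b ->
  gr_eq mul inv F (n + m) (comm mul inv u (mul a b))
        (mul (comm mul inv u a) (comm mul inv u b)).
Proof.
  intros Hn Hm Hu Ha Hb.
  pose proof (comm_F HF n m u b Hn Hm Hu Hb) as Hub.
  set (z := comm mul inv u b) in *. set (w := comm mul inv u a) in *.
  replace (comm mul inv u (mul a b)) with (mul w (mul a (mul z (inv a)))).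
  2:{ unfold z, w. gsimp HG. reflexivity. }
  apply (ge_mull HG HF).
  apply (ge_trans HG HF _ _ (mul a (mul (inv a) z))).
  + apply (ge_mull HG HF). apply (ge_central HG HF); auto; lia.
  + apply (ge_eq HG HF). apply (g_VK HG).
Qed.

Theorem proposition5p13 (G : Type) (mul : G -> G -> G) (inv : G -> G) (e : G)
  (F : nat -> G -> Prop) (R : G -> G)
  (HG : is_group mul inv e)
  (HF : is_filtration mul inv e F)
  (HR : is_filtered_RB mul inv F R)
  (HQ : gr_uniquely_divisible mul inv e F) :
  grR_well_defined mul inv F R /\
  grR_additive mul inv F R /\
  grR_Q_homogeneous mul inv e F R /\
  grR_RB_identity mul inv F R.
Proof.
  pose proof (rb_identity _ _ _ _ HR) as RB.
  assert (WD : forall n x y, gr_eq mul inv F n x y -> gr_eq mul inv F n (R x) (R y)).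
  { unfold gr_eq. intros n x y H.
    set (z := mul (mul (inv (R y)) (mul (inv y) x)) (inv (inv (R y)))).
    assert (Hz : F (S n) z) by (apply (F_conj HG HF); auto; lia).
    assert (E : mul (R y) (R z) = R x).
    { rewrite RB. f_equal. unfold z. gsimp HG. reflexivity. }
    rewrite <- E, (g_KV HG). apply (rb_filt _ _ _ _ HR); auto; lia. }
  assert (ADD : grR_additive mul inv F R).
  { intros n x y Hn Hx Hy. rewrite RB. apply WD.
    unfold gr_eq.
    replace (mul (inv (mul (mul (mul x (R x)) y) (inv (R x)))) (mul x y))
      with (comm mul inv (R x) (inv y)).
    - apply (F_mono HF (S n) (n + n)); try lia.
      apply (filt_comm _ _ _ _ HF); auto.
      + apply (rb_filt _ _ _ _ HR); auto.
      + apply (F_inv HF); auto.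
    - gsimp HG. reflexivity. }
  assert (Re : R e = e).
  { pose proof (RB e e) as H.
    replace (mul (mul (mul e (R e)) e) (inv (R e))) with e in H
      by (gsimp HG; reflexivity).
    rewrite <- (g_KV HG (R e) (R e)), H. apply (grp_left_inv _ _ _ HG). }
  assert (Fpow : forall n x k, 1 <= n -> F n x -> F n (gpow mul e x k)).
  { intros n x k Hn Hx. induction k; simpl.
    - apply (F_e HF); auto.
    - apply (F_mul HF); auto. }
  assert (Rpow : forall n x k, 1 <= n -> F n x ->
            gr_eq mul inv F n (R (gpow mul e x k)) (gpow mul e (R x) k)).
  { intros n x k Hn Hx. induction k; simpl.
    - rewrite Re. apply (ge_refl HG HF).
    - apply (ge_trans HG HF _ _ (mul (R x) (R (gpow mul e x k)))).
      + apply ADD; auto.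
      + apply (ge_mull HG HF); auto. }
  assert (Rinv : forall n x, 1 <= n -> F n x ->
            gr_eq mul inv F n (R (inv x)) (inv (R x))).
  { intros n x Hn Hx.
    pose proof (ADD n x (inv x) Hn Hx (F_inv HF n x Hn Hx)) as H.
    rewrite (g_mulVr HG), Re in H.
    apply (ge_mull HG HF _ _ _ (inv (R x))) in H.
    rewrite (g_KV HG), (g_mul1r HG) in H.
    apply (ge_sym HG HF); auto. }
  assert (Rz : forall n x a, 1 <= n -> F n x ->
            gr_eq mul inv F n (R (zpow mul inv e x a)) (zpow mul inv e (R x) a)).
  { intros n x a Hn Hx. destruct a; simpl.
    - rewrite Re. apply (ge_refl HG HF).
    - apply Rpow; auto.
    - apply (ge_trans HG HF _ _ (inv (R (gpow mul e x (Pos.to_nat p))))).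
      + apply Rinv; auto.
      + apply (ge_inv HG HF). apply Rpow; auto. }
  split; [|split; [|split]].
  - intros n x y _ _ _. apply WD.
  - exact ADD.
  - intros n a b x y Hn Hx Hy H.
    apply (ge_trans HG HF _ _ (R (zpow mul inv e y (Z.pos b)))).
    { apply (ge_sym HG HF). apply Rz; auto. }
    apply (ge_trans HG HF _ _ (R (zpow mul inv e x a))).
    { apply WD; auto. }
    apply Rz; auto.
  - intros n m x y Hn Hm Hx Hy.
    set (X := R x). set (Y := R y).
    assert (HX : F n X) by (apply (rb_filt _ _ _ _ HR); auto).
    assert (HY : F m Y) by (apply (rb_filt _ _ _ _ HR); auto).
    set (x' := mul (mul (inv X) (inv x)) X).
    set (y' := mul (mul (inv Y) (inv y)) Y).
    assert (Rx' : R x' = inv X).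
    { apply (g_inv_uniq HG). unfold X. rewrite RB.
      replace (mul (mul (mul x (R x)) x') (inv (R x))) with e; auto.
      unfold x', X. gsimp HG. reflexivity. }
    assert (Ry' : R y' = inv Y).
    { apply (g_inv_uniq HG). unfold Y. rewrite RB.
      replace (mul (mul (mul y (R y)) y') (inv (R y))) with e; auto.
      unfold y', Y. gsimp HG. reflexivity. }
    set (p := mul (mul (mul x X) y) (inv X)).
    assert (Rp : R p = mul X Y) by (unfold p, X, Y; rewrite RB; reflexivity).
    set (q := mul (mul (mul p (R p)) x') (inv (R p))).
    assert (Rq : R q = mul (mul X Y) (inv X)) by (unfold q; rewrite <- RB, Rp, Rx'; reflexivity).
    set (r := mul (mul (mul q (R q)) y') (inv (R q))).
    assert (Rr : R r = comm mul inv X Y) by (unfold r; rewrite <- RB, Rq, Ry'; reflexivity).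
    set (c := mul (comm mul inv (mul x X) (mul y Y)) (inv (comm mul inv X Y))).
    assert (rc : r = c).
    { unfold r. rewrite Rq. unfold q. rewrite Rp. unfold c, p, x', y'. gsimp HG. reflexivity. }
    rewrite <- Rr, rc.
    apply WD.
    set (N := n + m).
    assert (HN : 1 <= N) by (unfold N; lia).
    assert (Fxy : F N (comm mul inv x y)) by (apply (comm_F HF); auto).
    assert (FxY : F N (comm mul inv x Y)) by (apply (comm_F HF); auto).
    assert (FXy : F N (comm mul inv X y)) by (apply (comm_F HF); auto).
    assert (FXY : F N (comm mul inv X Y)) by (apply (comm_F HF); auto).
    set (A := comm mul inv x y) in *. set (B := comm mul inv x Y) in *.
    set (C := comm mul inv X y) in *. set (D := comm mul inv X Y) in *.
    assert (H1 : gr_eq mul inv F N (comm mul inv (mul x X) (mul y Y))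
                   (mul (mul A B) (mul C D))).
    { apply (ge_trans HG HF _ _ (mul (comm mul inv x (mul y Y)) (comm mul inv X (mul y Y)))).
      - apply (bilin_l HG HF n m); auto.
        apply (F_mul HF); auto.
      - apply (ge_mul HG HF); apply (bilin_r HG HF n m); auto. }
    apply (ge_trans HG HF _ _ (mul (mul (mul A B) (mul C D)) (inv D))).
    { unfold c. apply (ge_mulr HG HF). exact H1. }
    replace (mul (mul (mul A B) (mul C D)) (inv D)) with (mul (mul A B) C)
      by (gsimp HG; reflexivity).
    apply (ge_trans HG HF _ _ (mul C (mul A B))).
    { apply (ge_central HG HF); auto. apply (F_mul HF); auto. }
    apply (ge_trans HG HF _ _ (mul C (mul B A))).
    { apply (ge_mull HG HF). apply (ge_central HG HF); auto. }
    apply (ge_eq HG HF). apply (grp_assoc _ _ _ HG).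
Qed.
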